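(* Let $\{1,\mu_1,\mu_2,\mu_3\}$ be a quaternion basis ($\mu_1,\mu_2$ orthogonal pure unit quaternions, $\mu_3=\mu_1\mu_2$), and let $q=z_1+z_2\mu_2$ with $z_1,z_2$ random variables in $\mathbb{C}_{\mu_1}$ be a centered quaternion Gaussian random variable which is $(1,\mu_1)$-proper, i.e. $q\stackrel{d}{=}q\mu_1$. Let ${\bf q}_{\mathbb{C}}=[z_1,z_1^{\star},z_2,z_2^{\star}]^T$. Then $$\mathbb{E}[{\bf q}_{\mathbb{C}}{\bf q}_{\mathbb{C}}^{\dagger}]=\begin{bmatrix}\sigma^2 & 0 & 0 & \omega\\ 0 & \sigma^2 & \omega^{\star} & 0\\ 0 & \omega & \varsigma^2 & 0\\ \omega^{\star} & 0 & 0 & \varsigma^2\end{bmatrix},$$ where $\sigma^2=\mathbb{E}[|z_1|^2]\in\mathbb{R}$, $\varsigma^2=\mathbb{E}[|z_2|^2]\in\mathbb{R}$ and $\omega=\mathbb{E}[z_1z_2]\in\mathbb{C}_{\mu_1}$.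
   Context: $\mathbb{H}$ denotes the quaternions; $\mathbb{C}_{\mu_1}=\mathbb{R}\oplus\mu_1\mathbb{R}$ is the commutative subfield isomorphic to $\mathbb{C}$; $^{\star}$ denotes conjugation and $\dagger$ conjugate transpose. A quaternion Gaussian random variable is one whose four real components are jointly Gaussian; centered means $\mathbb{E}[q]=0$. $\stackrel{d}{=}$ denotes equality in distribution. *)

(* Defs.v *)
From HB Require Import structures.
From mathcomp Require Import all_boot all_order all_algebra.
From mathcomp Require Import all_classical all_reals all_analysis.
Set Implicit Arguments. Unset Strict Implicit. Unset Printing Implicit Defensive.
Import Order.TTheory GRing.Theory Num.Theory.
Local Open Scope classical_set_scope.
Local Open Scope ring_scope.

Record quat (R : Type) := Quat { qr : R; qi : R; qj : R; qk : R }.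

Section Quat.
Variable R : comNzRingType.
Implicit Types p q : quat R.

Definition qreal (a : R) : quat R := Quat a 0 0 0.
Definition qzero : quat R := qreal 0.
Definition qadd p q : quat R :=
  Quat (qr p + qr q) (qi p + qi q) (qj p + qj q) (qk p + qk q).
Definition qscale (a : R) q : quat R := Quat (a * qr q) (a * qi q) (a * qj q) (a * qk q).
Definition qmul p q : quat R :=
  Quat (qr p * qr q - qi p * qi q - qj p * qj q - qk p * qk q)
       (qr p * qi q + qi p * qr q + qj p * qk q - qk p * qj q)
       (qr p * qj q - qi p * qk q + qj p * qr q + qk p * qi q)
       (qr p * qk q + qi p * qj q - qj p * qi q + qk p * qr q).
Definition qconj q : quat R := Quat (qr q) (- qi q) (- qj q) (- qk q).
Definition qnorm2 q : R := qr q ^+ 2 + qi q ^+ 2 + qj q ^+ 2 + qk q ^+ 2.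

Definition pure_unit q := qr q = 0 /\ qnorm2 q = 1.
Definition qorth p q := qr p * qr q + qi p * qi q + qj p * qj q + qk p * qk q = 0.
Definition in_Cmu (mu x : quat R) := exists a b : R, x = qadd (qreal a) (qscale b mu).

Definition mx4_of (rows : seq (seq (quat R))) : 'M[quat R]_4 :=
  \matrix_(i < 4, j < 4) nth qzero (nth [::] rows i) j.
End Quat.

Section Prob.
Context {R : realType} {d : measure_display} {T : measurableType d}.
Variable P : probability T R.

Definition quat_coords (q : quat R) : R * R * R * R := (qr q, qi q, qj q, qk q).

Definition quat_rv (X : T -> quat R) :=
  [/\ measurable_fun setT (fun w => qr (X w)), measurable_fun setT (fun w => qi (X w)),
      measurable_fun setT (fun w => qj (X w)) & measurable_fun setT (fun w => qk (X w))].

Definition gaussian_rv (Y : T -> R) :=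
  measurable_fun setT Y /\
  exists m s : R, forall A : set R, measurable A ->
    P (Y @^-1` A) = if s == 0 then \d_m A else normal_prob m s A.

(* Quaternion Gaussian: the four real components are jointly Gaussian,
   i.e. every real linear combination of them is Gaussian *)
Definition quat_gaussian (X : T -> quat R) :=
  quat_rv X /\ forall a b c e : R,
    gaussian_rv (fun w => a * qr (X w) + b * qi (X w) + c * qj (X w) + e * qk (X w)).

Definition qexp (X : T -> quat R) : quat R :=
  Quat (fine 'E_P[fun w => qr (X w)]) (fine 'E_P[fun w => qi (X w)]) (fine 'E_P[fun w => qj (X w)]) (fine 'E_P[fun w => qk (X w)]).

Definition quat_centered (X : T -> quat R) := qexp X = qzero R.

Definition quat_eq_dist (X Y : T -> quat R) :=
  forall A : set (R * R * R * R), measurable A ->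
    P ((fun w => quat_coords (X w)) @^-1` A) = P ((fun w => quat_coords (Y w)) @^-1` A).
End Prob.

(* Main.v *)
Require Import Defs.
From HB Require Import structures.
From mathcomp Require Import all_boot all_order all_algebra.
From mathcomp Require Import all_classical all_reals all_analysis.
From mathcomp Require Import measurable_realfun ring.
Set Implicit Arguments. Unset Strict Implicit.
Import Order.TTheory GRing.Theory Num.Theory.
Local Open Scope classical_set_scope.
Local Open Scope ereal_scope.
Lemma fine_swap (R : realType) (u v : \bar R) : fine (v - u) = (- fine (u - v))%R.
Proof.
case: u => [u||]; case: v => [v||] //=; rewrite ?oppr0 //.
by rewrite opprB.
Qed.

Lemma fineE_N (R : realType) d (T : measurableType d) (P : probability T R) (f : T -> R) :
  fine 'E_P[fun w => (- f w)%R] = (- fine 'E_P[f])%R.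
Proof.
rewrite unlock integralE [X in _ = (- fine X)%R]integralE.
have -> : (fun w => ((- f w)%R)%:E)^\+ = (fun w => (f w)%:E)^\-.
  by rewrite -funeposN; apply/funext => w.
have -> : (fun w => ((- f w)%R)%:E)^\- = (fun w => (f w)%:E)^\+.
  by rewrite -funenegN; apply/funext => w.
exact: fine_swap.
Qed.

Lemma push_eq (R : realType) d (T : measurableType d) (P : probability T R)
  (X Y : T -> R * R * R * R) (mX : measurable_fun setT X) (mY : measurable_fun setT Y)
  (H : forall A, measurable A -> P (X @^-1` A) = P (Y @^-1` A))
  (G : R * R * R * R -> R) (mG : measurable_fun setT G) :
  'E_P[fun w => G (X w)] = 'E_P[fun w => G (Y w)].
Proof.
have /measurable_EFinP mGE := mG.
have key : forall (Z : T -> R * R * R * R) (mZ : measurable_fun setT Z)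
   (g : R * R * R * R -> \bar R), measurable_fun setT g -> (forall y, 0 <= g y) ->
   \int[P]_(w in setT) (g \o Z) w = \int[pushforward P Z]_(y in setT) g y.
  move=> Z mZ g mg g0.
  by rewrite (ge0_integral_pushforward mZ) // preimage_setT.
have posE : forall Z : T -> R * R * R * R,
   (fun w => (G (Z w))%:E)^\+ = (fun y => (G y)%:E)^\+ \o Z.
  by move=> Z; rewrite -funepos_comp.
have negE : forall Z : T -> R * R * R * R,
   (fun w => (G (Z w))%:E)^\- = (fun y => (G y)%:E)^\- \o Z.
  by move=> Z; rewrite -funeneg_comp.
rewrite unlock integralE [X in _ = X]integralE !posE !negE.
rewrite !key //; try exact: measurable_funepos; try exact: measurable_funeneg.
congr (_ - _); apply: eq_measure_integral => A mA _ /=; exact: H.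
Qed.

Local Open Scope ring_scope.

Definition cm (R : comNzRingType) (mu : quat R) (a b : R) := qadd (qreal a) (qscale b mu).
Definition dotq (R : comNzRingType) (p q : quat R) :=
  qr p * qr q + qi p * qi q + qj p * qj q + qk p * qk q.

Lemma cert (R : comNzRingType) (x y e1 e2 e3 k1 k2 k3 : R) : e1 = 1 -> e2 = 1 -> e3 = 0 ->
  x - y = k1 * (e1 - 1) + k2 * (e2 - 1) + k3 * e3 -> x = y.
Proof.
move=> -> -> -> h; apply/eqP; rewrite -subr_eq0 h; apply/eqP; ring.
Qed.

Section Alg.
Variables (R : comNzRingType) (m1 m2 m3 n1 n2 n3 : R).
Hypotheses (N1 : m1 ^+ 2 + m2 ^+ 2 + m3 ^+ 2 = 1) (N2 : n1 ^+ 2 + n2 ^+ 2 + n3 ^+ 2 = 1)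
  (O : m1 * n1 + m2 * n2 + m3 * n3 = 0).
Let M := Quat 0 m1 m2 m3.
Let Nq := Quat 0 n1 n2 n3.
Let e1 := m1 ^+ 2 + m2 ^+ 2 + m3 ^+ 2.
Let e2 := n1 ^+ 2 + n2 ^+ 2 + n3 ^+ 2.
Let e3 := m1 * n1 + m2 * n2 + m3 * n3.

Ltac qs := unfold cm, qadd, qreal, qscale, qmul, dotq, qconj, qnorm2 in *; simpl.
Tactic Notation "crt" uconstr(k1) uconstr(k2) uconstr(k3) := refine (@cert R _ _ _ _ _ (k1 : R) (k2 : R) (k3 : R) N1 N2 O _); rewrite /e1 /e2 /e3 /=; ring.

Lemma cm_mul a b c d : qmul (cm M a b) (cm M c d) = cm M (a * c - b * d) (a * d + b * c).
Proof.
qs; congr Quat; first crt (- b * d) 0 0.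
all: ring.
Qed.

Lemma cm_conj a b : qconj (cm M a b) = cm M a (- b).
Proof. qs; congr Quat; ring. Qed.

Lemma cm_norm a b : qnorm2 (cm M a b) = a ^+ 2 + b ^+ 2.
Proof. qs; crt (b ^+ 2) 0 0. Qed.

Lemma qr_cm a b : qr (cm M a b) = a.
Proof. qs; ring. Qed.

Lemma dot_cm a b : dotq (cm M a b) M = b.
Proof. qs; crt b 0 0. Qed.

Let Qv a b c d := qadd (cm M a b) (qmul (cm M c d) Nq).

Lemma Q1 a b c d : qr (Qv a b c d) = a.
Proof. qs; crt 0 0 (- d). Qed.
Lemma Q2 a b c d : dotq (Qv a b c d) M = b.
Proof. qs; crt b 0 c. Qed.
Lemma Q3 a b c d : dotq (Qv a b c d) Nq = c.
Proof. qs; crt 0 c b. Qed.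
Lemma Q4 a b c d : dotq (Qv a b c d) (qmul M Nq) = d.
Proof. qs; crt (d * e2) d (- a). Qed.
Lemma Q5 a b c d : qr (qmul (Qv a b c d) M) = - b.
Proof. qs; crt (- b) 0 (- c). Qed.
Lemma Q6 a b c d : dotq (qmul (Qv a b c d) M) M = a.
Proof. qs; crt a 0 (- d * e1). Qed.
Lemma Q7 a b c d : dotq (qmul (Qv a b c d) M) Nq = d.
Proof. qs; crt (d * e2) d (a - 2 * d * e3). Qed.
Lemma Q8 a b c d : dotq (qmul (Qv a b c d) M) (qmul M Nq) = - c.
Proof. qs; crt (- c * e2) (- c) (b * e1 + 2 * c * e3). Qed.
End Alg.

Lemma mp0 (R : realType) : measurable_fun setT (fun x : R * R * R * R => x.1.1.1).
Proof. exact: measurableT_comp measurable_fst (measurableT_comp measurable_fst measurable_fst). Qed.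
Lemma mp1 (R : realType) : measurable_fun setT (fun x : R * R * R * R => x.1.1.2).
Proof. exact: measurableT_comp measurable_snd (measurableT_comp measurable_fst measurable_fst). Qed.
Lemma mp2 (R : realType) : measurable_fun setT (fun x : R * R * R * R => x.1.2).
Proof. exact: measurableT_comp measurable_snd measurable_fst. Qed.
Lemma mp3 (R : realType) : measurable_fun setT (fun x : R * R * R * R => x.2).
Proof. exact: measurable_snd. Qed.

Ltac mfun := repeat first
  [ exact: mp0 | exact: mp1 | exact: mp2 | exact: mp3 | exact: measurable_cst
  | apply: measurable_funD | apply: measurable_funB | apply: measurable_funM
  | apply: measurable_funN | (apply: measurable_funX) ].


Lemma fineE_ext (R : realType) d (T : measurableType d) (P : probability T R) (f g : T -> R) :
  (forall w, f w = g w) -> fine ('E_P[f])%E = fine ('E_P[g])%E.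
Proof. by move=> H; rewrite (funext H). Qed.

Lemma fineE0 (R : realType) d (T : measurableType d) (P : probability T R) (f : T -> R) :
  (forall w, f w = 0) -> fine ('E_P[f])%E = 0.
Proof. by move=> H; rewrite unlock integral0_eq // => w _; rewrite H. Qed.

Lemma zero_flip (R : realType) d (T : measurableType d) (P : probability T R)
  (X Y : T -> R * R * R * R) (mX : measurable_fun setT X) (mY : measurable_fun setT Y)
  (H : forall A, measurable A -> P (X @^-1` A) = P (Y @^-1` A))
  (G : R * R * R * R -> R) (mG : measurable_fun setT G) :
  (forall w, G (Y w) = - G (X w)) -> fine ('E_P[fun w => G (X w)])%E = 0.
Proof.
move=> fl; have := push_eq mX mY H mG.
rewrite (funext fl) => /(congr1 fine); rewrite fineE_N => /eqP.
rewrite -subr_eq0 opprK -mulr2n mulrn_eq0 /= => /eqP //.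
Qed.

Definition qofc (R : Type) (x : R * R * R * R) : quat R := Quat x.1.1.1 x.1.1.2 x.1.2 x.2.

Definition Ent (R : comNzRingType) (M : quat R) (i j : nat) (a b c d : R) :=
  qmul (nth (qzero R) [:: cm M a b; qconj (cm M a b); cm M c d; qconj (cm M c d)] i)
       (qconj (nth (qzero R) [:: cm M a b; qconj (cm M a b); cm M c d; qconj (cm M c d)] j)).
Definition qneg (R : comNzRingType) (p : quat R) := Quat (- qr p) (- qi p) (- qj p) (- qk p).
Ltac qsg := unfold cm, qadd, qreal, qscale, qmul, dotq, qconj, qnorm2, qneg, qzero; simpl.
Lemma qconjQ (R : comNzRingType) (x y z t : R) : qconj (Quat x y z t) = Quat x (- y) (- z) (- t).
Proof. by []. Qed.
Ltac mf := lazymatch goal with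
 | |- measurable_fun _ (fun x => @?u x + @?v x) => apply: (measurable_funD (f := u) (g := v)); [mf | mf]
 | |- measurable_fun _ (fun x => @?u x * @?v x) => apply: (measurable_funM (f := u) (g := v)); [mf | mf]
 | |- measurable_fun _ (fun x => - @?u x) => apply: (measurable_funN (f := u)); mf
 | |- measurable_fun _ (fun x => x.1.1.1) => exact: mp0
 | |- measurable_fun _ (fun x => x.1.1.2) => exact: mp1
 | |- measurable_fun _ (fun x => x.1.2) => exact: mp2
 | |- measurable_fun _ (fun x => x.2) => exact: mp3
 | |- measurable_fun _ (fun x => ?c) => exact: measurable_cst
 end.

Local Open Scope ring_scope.
Ltac mfunT := repeat first [ assumption | exact: measurable_cst
  | apply: measurable_funD | apply: measurable_funB | apply: measurable_funM
  | apply: measurable_funN | (apply: measurable_funX) ].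

Theorem mainTheorem5 (R : realType) (d : measure_display) (T : measurableType d)
    (P : probability T R) (mu1 mu2 : quat R) (z1 z2 : T -> quat R) :
  pure_unit mu1 -> pure_unit mu2 -> qorth mu1 mu2 ->
  (forall w, in_Cmu mu1 (z1 w)) -> (forall w, in_Cmu mu1 (z2 w)) ->
  quat_rv z1 -> quat_rv z2 ->
  let q := fun w => qadd (z1 w) (qmul (z2 w) mu2) in
  quat_gaussian P q ->
  quat_centered P q ->
  quat_eq_dist P q (fun w => qmul (q w) mu1) ->
  let qC := fun w => [:: z1 w; qconj (z1 w); z2 w; qconj (z2 w)] in
  let sigma2 := qreal (fine ('E_P[fun w => qnorm2 (z1 w)])%E) in
  let varsigma2 := qreal (fine ('E_P[fun w => qnorm2 (z2 w)])%E) in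
  let omega := qexp P (fun w => qmul (z1 w) (z2 w)) in
  let o := qzero R in
  (\matrix_(i < 4, j < 4)
      qexp P (fun w => qmul (nth o (qC w) i) (qconj (nth o (qC w) j))))
  = mx4_of [:: [:: sigma2; o; o; omega];
              [:: o; sigma2; qconj omega; o];
              [:: o; omega; varsigma2; o];
              [:: qconj omega; o; o; varsigma2]].
Proof.
case: mu1 => m0 m1 m2 m3; case: mu2 => n0 n1 n2 n3.
move=> [h0 hN1] [g0 hN2] hO inC1 inC2 rv1 rv2; cbv zeta; move=> _ _ qeq.
simpl in h0, g0.
subst m0 n0.
have N1 : m1 ^+ 2 + m2 ^+ 2 + m3 ^+ 2 = 1 by rewrite -hN1 /qnorm2 /=; ring.
have N2 : n1 ^+ 2 + n2 ^+ 2 + n3 ^+ 2 = 1 by rewrite -hN2 /qnorm2 /=; ring.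
have O : m1 * n1 + m2 * n2 + m3 * n3 = 0 by rewrite -hO /qorth /=; ring.
pose M := Quat 0 m1 m2 m3; pose Nq := Quat 0 n1 n2 n3.
have [a [b hz1]] : exists a b : T -> R, forall w, z1 w = cm M (a w) (b w).
  exists (fun w => qr (z1 w)), (fun w => dotq (z1 w) M) => w.
  have [a0 [b0 E]] := inC1 w.
  have E' : z1 w = cm M a0 b0 := E.
  by rewrite E' qr_cm (dot_cm N1 N2 O).
have [c [dd hz2]] : exists a b : T -> R, forall w, z2 w = cm M (a w) (b w).
  exists (fun w => qr (z2 w)), (fun w => dotq (z2 w) M) => w.
  have [a0 [b0 E]] := inC2 w.
  have E' : z2 w = cm M a0 b0 := E.
  by rewrite E' qr_cm (dot_cm N1 N2 O).

have qofcK : forall p : quat R, qofc (quat_coords p) = p by case.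
case: rv1 => r1 i1 j1 k1; case: rv2 => r2 i2 j2 k2.
have mX : measurable_fun setT (fun w => quat_coords (qadd (z1 w) (qmul (z2 w) Nq))).
  rewrite /quat_coords; apply: measurable_fun_pair; [apply: measurable_fun_pair; [apply: measurable_fun_pair|]|].
  all: rewrite /qadd /qmul /=; mfunT.
have mY : measurable_fun setT (fun w => quat_coords (qmul (qadd (z1 w) (qmul (z2 w) Nq)) M)).
  rewrite /quat_coords; apply: measurable_fun_pair; [apply: measurable_fun_pair; [apply: measurable_fun_pair|]|].
  all: rewrite /qadd /qmul /=; mfunT.
have mL : measurable_fun setT (fun x : R * R * R * R => (qr (qofc x), dotq (qofc x) M,
     dotq (qofc x) Nq, dotq (qofc x) (qmul M Nq))).
  apply: measurable_fun_pair; [apply: measurable_fun_pair; [apply: measurable_fun_pair|]|].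
  all: rewrite /qofc /dotq /qmul /=; mfun.
have zc : forall f : R -> R -> R -> R -> R,
  measurable_fun setT (fun y : R * R * R * R => f y.1.1.1 y.1.1.2 y.1.2 y.2) ->
  (forall a b c d, f (-b) a d (-c) = - f a b c d) ->
  fine ('E_P[fun w => f (a w) (b w) (c w) (dd w)])%E = 0.
  move=> f mfy fl.
  have mf : measurable_fun setT (fun x : R * R * R * R => f (qr (qofc x)) (dotq (qofc x) M)
     (dotq (qofc x) Nq) (dotq (qofc x) (qmul M Nq))) := measurableT_comp mfy mL.
  transitivity (fine ('E_P[fun w => (fun x : R * R * R * R => f (qr (qofc x)) (dotq (qofc x) M)
     (dotq (qofc x) Nq) (dotq (qofc x) (qmul M Nq))) (quat_coords (qadd (z1 w) (qmul (z2 w) Nq)))])%E).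
    apply: fineE_ext => w; cbv beta; rewrite qofcK hz1 hz2.
    by rewrite (Q1 N1 N2 O) (Q2 N1 N2 O) (Q3 N1 N2 O) (Q4 N1 N2 O).
  apply: (zero_flip mX mY qeq mf) => w; cbv beta; rewrite !qofcK hz1 hz2.
  rewrite (Q5 N1 N2 O) (Q6 N1 N2 O) (Q7 N1 N2 O) (Q8 N1 N2 O) (Q1 N1 N2 O) (Q2 N1 N2 O) (Q3 N1 N2 O) (Q4 N1 N2 O); exact: fl.

have ez1 : z1 = fun w => cm M (a w) (b w) := funext hz1.
have ez2 : z2 = fun w => cm M (c w) (dd w) := funext hz2.
have zeroEnt : forall i j,
  (forall a b c d, Ent M i j (-b) a d (-c) = qneg (Ent M i j a b c d)) ->
  measurable_fun setT (fun y : R * R * R * R => qr (Ent M i j y.1.1.1 y.1.1.2 y.1.2 y.2)) ->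
  measurable_fun setT (fun y : R * R * R * R => qi (Ent M i j y.1.1.1 y.1.1.2 y.1.2 y.2)) ->
  measurable_fun setT (fun y : R * R * R * R => qj (Ent M i j y.1.1.1 y.1.1.2 y.1.2 y.2)) ->
  measurable_fun setT (fun y : R * R * R * R => qk (Ent M i j y.1.1.1 y.1.1.2 y.1.2 y.2)) ->
  qexp P (fun w => Ent M i j (a w) (b w) (c w) (dd w)) = qzero R.
  move=> i j fl mr mi mj mk; rewrite /qexp /qzero /qreal; congr Quat.
  - by apply: (zc (fun a b c d => qr (Ent M i j a b c d))) => // a' b' c' d'; rewrite fl.
  - by apply: (zc (fun a b c d => qi (Ent M i j a b c d))) => // a' b' c' d'; rewrite fl.
  - by apply: (zc (fun a b c d => qj (Ent M i j a b c d))) => // a' b' c' d'; rewrite fl.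
  - by apply: (zc (fun a b c d => qk (Ent M i j a b c d))) => // a' b' c' d'; rewrite fl.
have cmM := cm_mul N1 N2 O; have cmN := cm_norm N1 N2 O.
rewrite ez1 ez2; cbv beta.
apply/matrixP => i j; rewrite /mx4_of !mxE.
rewrite -[qexp P _]/(qexp P (fun w => Ent M i j (a w) (b w) (c w) (dd w))).
case: i => [[|[|[|[|i]]]] Hi] //; case: j => [[|[|[|[|j]]]] Hj] //; cbv [nth nat_of_ord].
- unfold qexp, qreal, qzero; rewrite ?qconjQ; congr Quat.
  + apply: fineE_ext => w; rewrite /Ent; cbv [nth]; qsg; ring.
  + apply: fineE0 => w; rewrite /Ent; cbv [nth]; qsg; ring.
  + apply: fineE0 => w; rewrite /Ent; cbv [nth]; qsg; ring.
  + apply: fineE0 => w; rewrite /Ent; cbv [nth]; qsg; ring.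
- apply: zeroEnt;
    [ move=> a' b' c' d'; rewrite /Ent; cbv [nth];
      rewrite ?cm_conj !cmM; qsg; congr Quat; ring
    | rewrite /Ent /=; qsg; mf ..].
- apply: zeroEnt;
    [ move=> a' b' c' d'; rewrite /Ent; cbv [nth];
      rewrite ?cm_conj !cmM; qsg; congr Quat; ring
    | rewrite /Ent /=; qsg; mf ..].
- unfold qexp, qreal, qzero; rewrite ?qconjQ; congr Quat.
  + apply: fineE_ext => w; rewrite /Ent; cbv [nth]; qsg; ring.
  + apply: fineE_ext => w; rewrite /Ent; cbv [nth]; qsg; ring.
  + apply: fineE_ext => w; rewrite /Ent; cbv [nth]; qsg; ring.
  + apply: fineE_ext => w; rewrite /Ent; cbv [nth]; qsg; ring.
- apply: zeroEnt;
    [ move=> a' b' c' d'; rewrite /Ent; cbv [nth];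
      rewrite ?cm_conj !cmM; qsg; congr Quat; ring
    | rewrite /Ent /=; qsg; mf ..].
- unfold qexp, qreal, qzero; rewrite ?qconjQ; congr Quat.
  + apply: fineE_ext => w; rewrite /Ent; cbv [nth]; qsg; ring.
  + apply: fineE0 => w; rewrite /Ent; cbv [nth]; qsg; ring.
  + apply: fineE0 => w; rewrite /Ent; cbv [nth]; qsg; ring.
  + apply: fineE0 => w; rewrite /Ent; cbv [nth]; qsg; ring.
- unfold qexp, qreal, qzero; rewrite ?qconjQ; congr Quat.
  + apply: fineE_ext => w; rewrite /Ent; cbv [nth]; qsg; ring.
  + rewrite -fineE_N; apply: fineE_ext => w; rewrite /Ent; cbv [nth]; qsg; ring.
  + rewrite -fineE_N; apply: fineE_ext => w; rewrite /Ent; cbv [nth]; qsg; ring.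
  + rewrite -fineE_N; apply: fineE_ext => w; rewrite /Ent; cbv [nth]; qsg; ring.
- apply: zeroEnt;
    [ move=> a' b' c' d'; rewrite /Ent; cbv [nth];
      rewrite ?cm_conj !cmM; qsg; congr Quat; ring
    | rewrite /Ent /=; qsg; mf ..].
- apply: zeroEnt;
    [ move=> a' b' c' d'; rewrite /Ent; cbv [nth];
      rewrite ?cm_conj !cmM; qsg; congr Quat; ring
    | rewrite /Ent /=; qsg; mf ..].
- unfold qexp, qreal, qzero; rewrite ?qconjQ; congr Quat.
  + apply: fineE_ext => w; rewrite /Ent; cbv [nth]; qsg; ring.
  + apply: fineE_ext => w; rewrite /Ent; cbv [nth]; qsg; ring.
  + apply: fineE_ext => w; rewrite /Ent; cbv [nth]; qsg; ring.
  + apply: fineE_ext => w; rewrite /Ent; cbv [nth]; qsg; ring.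
- unfold qexp, qreal, qzero; rewrite ?qconjQ; congr Quat.
  + apply: fineE_ext => w; rewrite /Ent; cbv [nth]; qsg; ring.
  + apply: fineE0 => w; rewrite /Ent; cbv [nth]; qsg; ring.
  + apply: fineE0 => w; rewrite /Ent; cbv [nth]; qsg; ring.
  + apply: fineE0 => w; rewrite /Ent; cbv [nth]; qsg; ring.
- apply: zeroEnt;
    [ move=> a' b' c' d'; rewrite /Ent; cbv [nth];
      rewrite ?cm_conj !cmM; qsg; congr Quat; ring
    | rewrite /Ent /=; qsg; mf ..].
- unfold qexp, qreal, qzero; rewrite ?qconjQ; congr Quat.
  + apply: fineE_ext => w; rewrite /Ent; cbv [nth]; qsg; ring.
  + rewrite -fineE_N; apply: fineE_ext => w; rewrite /Ent; cbv [nth]; qsg; ring.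
  + rewrite -fineE_N; apply: fineE_ext => w; rewrite /Ent; cbv [nth]; qsg; ring.
  + rewrite -fineE_N; apply: fineE_ext => w; rewrite /Ent; cbv [nth]; qsg; ring.
- apply: zeroEnt;
    [ move=> a' b' c' d'; rewrite /Ent; cbv [nth];
      rewrite ?cm_conj !cmM; qsg; congr Quat; ring
    | rewrite /Ent /=; qsg; mf ..].
- apply: zeroEnt;
    [ move=> a' b' c' d'; rewrite /Ent; cbv [nth];
      rewrite ?cm_conj !cmM; qsg; congr Quat; ring
    | rewrite /Ent /=; qsg; mf ..].
- unfold qexp, qreal, qzero; rewrite ?qconjQ; congr Quat.
  + apply: fineE_ext => w; rewrite /Ent; cbv [nth]; qsg; ring.
  + apply: fineE0 => w; rewrite /Ent; cbv [nth]; qsg; ring.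
  + apply: fineE0 => w; rewrite /Ent; cbv [nth]; qsg; ring.
  + apply: fineE0 => w; rewrite /Ent; cbv [nth]; qsg; ring.
Qed.
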